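(* Let $\mathcal I\in\mathbb Q^{n\times n\times n_3}$ be the identity quaternion tensor. Then for every $\mathcal A\in\mathbb Q^{n\times n\times n_3}$, $\mathcal I+\mathcal A$ is invertible if and only if $I_{nn_3}+\mathtt{bcirc_z}(\mathcal A)$ is invertible.
   Context: $\mathbb Q$ denotes the real quaternions with the usual Hamilton multiplication; $\mathbb C$ is identified with $\{a_0+a_1\mathbf i\}$. Every quaternion array $A=A_0+A_1\mathbf i+A_2\mathbf j+A_3\mathbf k$ (real $A_t$) is written uniquely as $A=A_{\mathbf d}+\mathbf jA_{\mathbf c}$ with $A_{\mathbf d}=A_0+A_1\mathbf i$, $A_{\mathbf c}=A_2-A_3\mathbf i$. For $\mathcal A\in\mathbb Q^{n_1\times n_2\times n_3}$, $\mathcal A^{(s)}=\mathcal A(:,:,s)$. For a complex tensor $\mathcal C$, $\mathtt{bcirc}(\mathcal C)$ is the block circulant matrix with $(p,q)$ block $\mathcal C^{(((p-q)\bmod n_3)+1)}$. $P_{n_3}$ is the permutation matrix with first row $e_1^T$ and $r$-th row $e_{n_3+2-r}^T$ ($r\ge2$). $\mathtt{bcirc_z}(\mathcal A)=\mathtt{bcirc}(\mathcal A_{\mathbf d})+\mathbf j\,\mathtt{bcirc}(\mathcal A_{\mathbf c})(P_{n_3}\otimes I_{n_2})$. $\mathtt{unfold}(\mathcal B)=[\mathcal B^{(1)};\dots;\mathcal B^{(n_3)}]$, $\mathtt{fold}$ its inverse; QT-product $\mathcal A*_Q\mathcal B=\mathtt{fold}(\mathtt{bcirc_z}(\mathcal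 A)\mathtt{unfold}(\mathcal B))$. The identity tensor $\mathcal I$ has first frontal slice $I_n$ and all other frontal slices zero. A tensor $\mathcal M$ is invertible if there is $\mathcal N$ with $\mathcal M*_Q\mathcal N=\mathcal N*_Q\mathcal M=\mathcal I$. *)

(* Defs.v *)
From HB Require Import structures.
From mathcomp Require Import all_boot all_order all_algebra.
From mathcomp Require Import reals.
Set Implicit Arguments. Unset Strict Implicit. Unset Printing Implicit Defensive.
Import Order.TTheory GRing.Theory Num.Theory.
Local Open Scope ring_scope.

Record quat (R : Type) := Quat { q0 : R; q1 : R; q2 : R; q3 : R }.

Section Quat.
Variable R : realType.
Definition qzero : quat R := Quat 0 0 0 0.
Definition qone : quat R := Quat 1 0 0 0.
Definition qj : quat R := Quat 0 0 1 0.
Definition qadd (x y : quat R) : quat R :=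
  Quat (q0 x + q0 y) (q1 x + q1 y) (q2 x + q2 y) (q3 x + q3 y).
(* Hamilton product: i^2 = j^2 = k^2 = ijk = -1 *)
Definition qmul (x y : quat R) : quat R :=
  Quat (q0 x * q0 y - q1 x * q1 y - q2 x * q2 y - q3 x * q3 y)
       (q0 x * q1 y + q1 x * q0 y + q2 x * q3 y - q3 x * q2 y)
       (q0 x * q2 y - q1 x * q3 y + q2 x * q0 y + q3 x * q1 y)
       (q0 x * q3 y + q1 x * q2 y - q2 x * q1 y + q3 x * q0 y).
(* x = x_d + j x_c with x_d = x0 + x1 i, x_c = x2 - x3 i (complex numbers
   identified with quaternions a0 + a1 i) *)
Definition qd (x : quat R) : quat R := Quat (q0 x) (q1 x) 0 0.
Definition qc (x : quat R) : quat R := Quat (q2 x) (- q3 x) 0 0.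
End Quat.

Section QMatrix.
Variable R : realType.
Definition qaddmx m n (A B : 'M[quat R]_(m, n)) : 'M[quat R]_(m, n) :=
  \matrix_(i, j) qadd (A i j) (B i j).
Definition qmulmx m n p (A : 'M[quat R]_(m, n)) (B : 'M[quat R]_(n, p))
  : 'M[quat R]_(m, p) :=
  \matrix_(i, j) \big[@qadd R/qzero R]_(k < n) qmul (A i k) (B k j).
Definition qscalemx m n (q : quat R) (A : 'M[quat R]_(m, n)) : 'M[quat R]_(m, n) :=
  \matrix_(i, j) qmul q (A i j).
Definition qzeromx m n : 'M[quat R]_(m, n) := \matrix_(i, j) qzero R.
Definition qI n : 'M[quat R]_n :=
  \matrix_(i, j) if i == j then qone R else qzero R.
Definition qmx_invertible n (M : 'M[quat R]_n) : Prop :=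
  exists N : 'M[quat R]_n, qmulmx M N = qI n /\ qmulmx N M = qI n.
End QMatrix.

Lemma blk_proof (n3 n : nat) (k : 'I_(n3 * n)) : (k %/ n < n3)%N.
Proof.
case: n k => [|n] k; first by case: k => k; rewrite muln0.
by rewrite ltn_divLR // ltn_ord.
Qed.
Lemma inb_proof (n3 n : nat) (k : 'I_(n3 * n)) : (k %% n < n)%N.
Proof.
case: n k => [|n] k; first by case: k => k; rewrite muln0.
by rewrite ltn_pmod.
Qed.
Lemma mkidx_proof (n3 n : nat) (s : 'I_n3) (i : 'I_n) : (s * n + i < n3 * n)%N.
Proof.
case: s i => s hs [i hi].
have : (s * n + i < s.+1 * n)%N by rewrite mulSn addnC ltn_add2r.
move/leq_trans; apply; by rewrite leq_mul2r hs orbT.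
Qed.
Definition blk n3 n (k : 'I_(n3 * n)) : 'I_n3 := Ordinal (blk_proof k).
Definition inb n3 n (k : 'I_(n3 * n)) : 'I_n := Ordinal (inb_proof k).
Definition mkidx n3 n (s : 'I_n3) (i : 'I_n) : 'I_(n3 * n) :=
  Ordinal (mkidx_proof s i).
(* (p - q) mod n3, as an element of 'I_n3 *)
Lemma subord_proof n3 (p q : 'I_n3) : ((p + (n3 - q)) %% n3 < n3)%N.
Proof. by rewrite ltn_pmod // (leq_ltn_trans _ (ltn_ord p)). Qed.
Definition subord n3 (p q : 'I_n3) : 'I_n3 := Ordinal (subord_proof p q).

(* A tensor in Q^{n1 x n2 x n3} is the family of its frontal slices
   A^{(s)} = A(:,:,s), s = 1..n3 (here indexed by s : 'I_n3, 0-based). *)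
Definition qtensor (R : realType) n1 n2 n3 := {ffun 'I_n3 -> 'M[quat R]_(n1, n2)}.

Section QTensor.
Variable R : realType.
Definition tmap n1 n2 n3 (f : quat R -> quat R) (A : qtensor R n1 n2 n3)
  : qtensor R n1 n2 n3 := [ffun s => \matrix_(i, j) f (A s i j)].
Definition tensor_d n1 n2 n3 (A : qtensor R n1 n2 n3) := tmap (@qd R) A.
Definition tensor_c n1 n2 n3 (A : qtensor R n1 n2 n3) := tmap (@qc R) A.
Definition qtadd n1 n2 n3 (A B : qtensor R n1 n2 n3) : qtensor R n1 n2 n3 :=
  [ffun s => qaddmx (A s) (B s)].

(* block circulant matrix: (p,q) block is C^{((p-q) mod n3)+1} *)
Definition bcirc n1 n2 n3 (C : qtensor R n1 n2 n3) : 'M[quat R]_(n3 * n1, n3 * n2) :=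
  \matrix_(k, l) C (subord (blk k) (blk l)) (inb k) (inb l).

(* P_{n3}: first row e_1^T, r-th row e_{n3+2-r}^T (r >= 2); 0-based:
   row 0 has its 1 in column 0, row r >= 1 has its 1 in column n3 - r *)
Definition Pmx n3 : 'M[quat R]_n3 :=
  \matrix_(r, c) if (c == (if r == 0%N :> nat then 0%N else (n3 - r)%N) :> nat)
                 then qone R else qzero R.

Definition qkron m1 n1 m2 n2 (A : 'M[quat R]_(m1, n1)) (B : 'M[quat R]_(m2, n2))
  : 'M[quat R]_(m1 * m2, n1 * n2) :=
  \matrix_(k, l) qmul (A (blk k) (blk l)) (B (inb k) (inb l)).

Definition bcirc_z n1 n2 n3 (A : qtensor R n1 n2 n3) : 'M[quat R]_(n3 * n1, n3 * n2) :=
  qaddmx (bcirc (tensor_d A))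
         (qscalemx (qj R) (qmulmx (bcirc (tensor_c A)) (qkron (Pmx n3) (qI R n2)))).

Definition unfold n1 n2 n3 (B : qtensor R n1 n2 n3) : 'M[quat R]_(n3 * n1, n2) :=
  \matrix_(k, j) B (blk k) (inb k) j.
Definition fold n1 n2 n3 (M : 'M[quat R]_(n3 * n1, n2)) : qtensor R n1 n2 n3 :=
  [ffun s => \matrix_(i, j) M (mkidx s i) j].

Definition qtmul n1 n2 n4 n3 (A : qtensor R n1 n2 n3) (B : qtensor R n2 n4 n3)
  : qtensor R n1 n4 n3 := fold (qmulmx (bcirc_z A) (unfold B)).

Definition qtI n n3 : qtensor R n n n3 :=
  [ffun s : 'I_n3 => if (nat_of_ord s == 0%N) then qI R n else qzeromx R n n].

Definition qt_invertible n n3 (M : qtensor R n n n3) : Prop :=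
  exists N : qtensor R n n n3, qtmul M N = qtI n n3 /\ qtmul N M = qtI n n3.
End QTensor.

(* Main.v *)
From HB Require Import structures.
Require Import Defs.
From mathcomp Require Import all_boot all_order all_algebra.
From mathcomp Require Import reals.
From mathcomp Require Import ring zify.
Set Implicit Arguments. Unset Strict Implicit. Unset Printing Implicit Defensive.
Import Order.TTheory GRing.Theory Num.Theory.
Local Open Scope ring_scope.

Lemma quatP (R : realType) (x y : quat R) :
  q0 x = q0 y -> q1 x = q1 y -> q2 x = q2 y -> q3 x = q3 y -> x = y.
Proof. by case: x => ????; case: y => ???? /= -> -> -> ->. Qed.

Lemma qaddA (R : realType) : associative (@qadd R).
Proof. move=> x y z; apply: quatP; simpl; ring. Qed.
Lemma qaddC (R : realType) : commutative (@qadd R).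
Proof. move=> x y; apply: quatP; simpl; ring. Qed.
Lemma qadd0q (R : realType) : left_id (qzero R) (@qadd R).
Proof. move=> x; apply: quatP; simpl; ring. Qed.

HB.instance Definition _ (R : realType) :=
  Monoid.isComLaw.Build (quat R) (qzero R) (@qadd R) (@qaddA R) (@qaddC R) (@qadd0q R).

Section Proof.
Variable R : realType.
Implicit Types x y z : quat R.

Lemma qaddq0 x : qadd x (qzero R) = x.
Proof. apply: quatP; simpl; ring. Qed.
Lemma qmulA x y z : qmul (qmul x y) z = qmul x (qmul y z).
Proof. apply: quatP; simpl; ring. Qed.
Lemma qmul1q x : qmul (qone R) x = x.
Proof. apply: quatP; simpl; ring. Qed.
Lemma qmulq1 x : qmul x (qone R) = x.
Proof. apply: quatP; simpl; ring. Qed.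
Lemma qmul0q x : qmul (qzero R) x = qzero R.
Proof. apply: quatP; simpl; ring. Qed.
Lemma qmulq0 x : qmul x (qzero R) = qzero R.
Proof. apply: quatP; simpl; ring. Qed.
Lemma qmulDl x y z : qmul (qadd x y) z = qadd (qmul x z) (qmul y z).
Proof. apply: quatP; simpl; ring. Qed.
Lemma qmulDr x y z : qmul x (qadd y z) = qadd (qmul x y) (qmul x z).
Proof. apply: quatP; simpl; ring. Qed.

Lemma qmul_suml (I : Type) (r : seq I) (P : pred I) (F : I -> quat R) y :
  qmul (\big[@qadd R/qzero R]_(i <- r | P i) F i) y
  = \big[@qadd R/qzero R]_(i <- r | P i) qmul (F i) y.
Proof. exact: (big_morph (fun x => qmul x y) (fun a b => qmulDl a b y) (qmul0q y)). Qed.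
Lemma qmul_sumr (I : Type) (r : seq I) (P : pred I) (F : I -> quat R) y :
  qmul y (\big[@qadd R/qzero R]_(i <- r | P i) F i)
  = \big[@qadd R/qzero R]_(i <- r | P i) qmul y (F i).
Proof. exact: (big_morph (fun x => qmul y x) (fun a b => qmulDr y a b) (qmulq0 y)). Qed.

Lemma qsum_comp (f : quat R -> R) (hD : forall x y, f (qadd x y) = f x + f y)
  (h0 : f (qzero R) = 0) (I : Type) (r : seq I) (P : pred I) (F : I -> quat R) :
  f (\big[@qadd R/qzero R]_(i <- r | P i) F i) = \sum_(i <- r | P i) f (F i).
Proof. exact: (big_morph f hD h0). Qed.

Lemma qsum2_comp (f : quat R -> R) (hD : forall x y, f (qadd x y) = f x + f y)
  (h0 : f (qzero R) = 0) (I J : finType) (F : I -> J -> quat R) :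
  f (\big[@qadd R/qzero R]_i \big[@qadd R/qzero R]_j F i j)
  = \sum_i \sum_j f (F i j).
Proof.
rewrite (qsum_comp hD h0); apply: eq_bigr => i _; exact: (qsum_comp hD h0).
Qed.

Lemma big_qdelta (I : finType) (i0 : I) (G : I -> quat R) :
  (forall i, i != i0 -> G i = qzero R) -> \big[@qadd R/qzero R]_i G i = G i0.
Proof.
move=> h; rewrite (bigD1 i0) //=.
rewrite big1; first exact: qaddq0.
by move=> i hi; apply: h.
Qed.

Lemma blk_mkidx n3 n (s : 'I_n3) (i : 'I_n) : blk (mkidx s i) = s.
Proof.
apply: val_inj => /=.
have n0 : (0 < n)%N := leq_ltn_trans (leq0n _) (ltn_ord i).
by rewrite divnMDl // divn_small // addn0.
Qed.
Lemma inb_mkidx n3 n (s : 'I_n3) (i : 'I_n) : inb (mkidx s i) = i.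
Proof. by apply: val_inj => /=; rewrite modnMDl modn_small. Qed.
Lemma mkidx_blk_inb n3 n (k : 'I_(n3 * n)) : mkidx (blk k) (inb k) = k.
Proof. by apply: val_inj => /=; rewrite -divn_eq. Qed.
Lemma cond_mkidx n3 n (m : 'I_(n3 * n)) s i :
  (blk m == s) && (inb m == i) = (m == mkidx s i).
Proof.
apply/andP/eqP => [[/eqP <- /eqP <-]|->]; first by rewrite mkidx_blk_inb.
by rewrite blk_mkidx inb_mkidx.
Qed.

Lemma big_split_idx (T : Type) (idx : T) (op : Monoid.com_law idx) n3 n
  (F : 'I_(n3 * n) -> T) :
  \big[op/idx]_(k < n3 * n) F k
  = \big[op/idx]_(s < n3) \big[op/idx]_(i < n) F (mkidx s i).
Proof.
rewrite pair_big /=.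
rewrite (reindex (fun p : 'I_n3 * 'I_n => mkidx p.1 p.2)); last first.
  exists (fun k => (blk k, inb k)) => [[s i] _ | k _] /=.
    by rewrite blk_mkidx inb_mkidx.
  by rewrite mkidx_blk_inb.
by apply: eq_big.
Qed.

Lemma subordE t (p q : 'I_t.+1) : subord p q = p - q.
Proof. by apply: val_inj => /=; rewrite modnDmr. Qed.

Lemma negordE t (r : 'I_t.+1) :
  nat_of_ord (- r) = (if nat_of_ord r == 0%N then 0%N else (t.+1 - r)%N).
Proof.
case: r => [[|r] hr] /=; first by rewrite subn0 modnn.
rewrite modn_small //; lia.
Qed.

Lemma ix1 (V : zmodType) (p q r : V) : p - (r + q) = p - q - r.
Proof. by rewrite opprD addrA addrAC. Qed.
Lemma ix2 (V : zmodType) (p q r : V) : p + (r - q) = p - q + r.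
Proof. by rewrite addrCA addrC. Qed.
Lemma ix3 (V : zmodType) (p q r : V) : p - (r - q) = p + q - r.
Proof. by rewrite opprB addrA. Qed.
Lemma ix4 (V : zmodType) (p q r : V) : p + (r + q) = p + q + r.
Proof. by rewrite addrA addrAC. Qed.

Lemma qaddmxE m n (A B : 'M[quat R]_(m, n)) i j : qaddmx A B i j = qadd (A i j) (B i j).
Proof. by rewrite /qaddmx mxE. Qed.
Lemma qscalemxE m n q (A : 'M[quat R]_(m, n)) i j : qscalemx q A i j = qmul q (A i j).
Proof. by rewrite /qscalemx mxE. Qed.
Lemma qmulmxE m n p (A : 'M[quat R]_(m, n)) (B : 'M[quat R]_(n, p)) i j :
  qmulmx A B i j = \big[@qadd R/qzero R]_(k < n) qmul (A i k) (B k j).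
Proof. by rewrite /qmulmx mxE. Qed.
Lemma qIE n (i j : 'I_n) : qI R n i j = if i == j then qone R else qzero R.
Proof. by rewrite /qI mxE. Qed.
Lemma qzeromxE m n (i : 'I_m) (j : 'I_n) : qzeromx R m n i j = qzero R.
Proof. by rewrite /qzeromx mxE. Qed.
Lemma bcircE n1 n2 n3 (C : qtensor R n1 n2 n3) k l :
  bcirc C k l = C (subord (blk k) (blk l)) (inb k) (inb l).
Proof. by rewrite /bcirc mxE. Qed.
Lemma tmapE n1 n2 n3 f (A : qtensor R n1 n2 n3) s i j : tmap f A s i j = f (A s i j).
Proof. by rewrite /tmap ffunE mxE. Qed.
Lemma unfoldE n1 n2 n3 (B : qtensor R n1 n2 n3) k j : unfold B k j = B (blk k) (inb k) j.
Proof. by rewrite /unfold mxE. Qed.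
Lemma foldE n1 n2 n3 (M : 'M[quat R]_(n3 * n1, n2)) s i j : fold M s i j = M (mkidx s i) j.
Proof. by rewrite /fold ffunE mxE. Qed.
Lemma qtaddE n1 n2 n3 (A B : qtensor R n1 n2 n3) s i j :
  qtadd A B s i j = qadd (A s i j) (B s i j).
Proof. by rewrite /qtadd ffunE qaddmxE. Qed.
Lemma qtIE n t (s : 'I_t.+1) (i j : 'I_n) :
  qtI R n t.+1 s i j = if (s == 0) && (i == j) then qone R else qzero R.
Proof.
rewrite /qtI ffunE.
have -> : (nat_of_ord s == 0%N) = (s == 0) by [].
by case: (s == 0) => /=; rewrite ?qIE ?qzeromxE.
Qed.

Lemma unfoldK n1 n2 n3 (M : 'M[quat R]_(n3 * n1, n2)) : unfold (fold M) = M.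
Proof. by apply/matrixP => k j; rewrite unfoldE foldE mkidx_blk_inb. Qed.
Lemma foldK n1 n2 n3 (S : qtensor R n1 n2 n3) : fold (unfold S) = S.
Proof.
by apply/ffunP => s; apply/matrixP => i j; rewrite foldE unfoldE blk_mkidx inb_mkidx.
Qed.

Lemma qmulmxA m n p r (A : 'M[quat R]_(m, n)) (B : 'M[quat R]_(n, p)) (C : 'M[quat R]_(p, r)) :
  qmulmx (qmulmx A B) C = qmulmx A (qmulmx B C).
Proof.
apply/matrixP => i j; rewrite !qmulmxE.
under eq_bigr do rewrite qmulmxE qmul_suml.
under [RHS]eq_bigr do rewrite qmulmxE qmul_sumr.
rewrite exchange_big; apply: eq_bigr => a _; apply: eq_bigr => b _.
exact: qmulA.
Qed.

Lemma qmul1mx m n (M : 'M[quat R]_(m, n)) : qmulmx (qI R m) M = M.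
Proof.
apply/matrixP => i j; rewrite qmulmxE (big_qdelta (i0 := i)).
  by rewrite qIE eqxx qmul1q.
by move=> k hk; rewrite qIE eq_sym (negPf hk) qmul0q.
Qed.
Lemma qmulmx1 m n (M : 'M[quat R]_(m, n)) : qmulmx M (qI R n) = M.
Proof.
apply/matrixP => i j; rewrite qmulmxE (big_qdelta (i0 := j)).
  by rewrite qIE eqxx qmulq1.
by move=> k hk; rewrite qIE (negPf hk) qmulq0.
Qed.

Definition qmix x y : quat R := Quat (q0 x) (q1 x) (q2 y) (q3 y).

Lemma KentryE t n (m l : 'I_(t.+1 * n)) :
  qkron (Pmx R t.+1) (qI R n) m l
  = if (blk m == - blk l) && (inb m == inb l) then qone R else qzero R.
Proof.
rewrite /qkron mxE /Pmx mxE qIE -negordE.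
have -> : (nat_of_ord (blk l) == nat_of_ord (- blk m)) = (blk l == - blk m) by [].
rewrite eq_sym eqr_oppLR.
by case: (blk m == - blk l); case: (inb m == inb l); apply: quatP; simpl; ring.
Qed.

Lemma bcirc_zE t n1 n2 (A : qtensor R n1 n2 t.+1) k l :
  bcirc_z A k l = qmix (A (blk k - blk l) (inb k) (inb l)) (A (blk k + blk l) (inb k) (inb l)).
Proof.
rewrite /bcirc_z qaddmxE qscalemxE qmulmxE.
rewrite (big_qdelta (i0 := mkidx (- blk l) (inb l))); last first.
  by move=> m hm; rewrite KentryE cond_mkidx (negPf hm) qmulq0.
rewrite KentryE blk_mkidx inb_mkidx !eqxx /= qmulq1.
rewrite !bcircE /tensor_d /tensor_c !tmapE blk_mkidx inb_mkidx !subordE opprK.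
apply: quatP; simpl; ring.
Qed.

Lemma qtmulE t n1 n2 n4 (A : qtensor R n1 n2 t.+1) (B : qtensor R n2 n4 t.+1) s i j :
  qtmul A B s i j = \big[@qadd R/qzero R]_(r < t.+1) \big[@qadd R/qzero R]_(m < n2)
     qmul (qmix (A (s - r) i m) (A (s + r) i m)) (B r m j).
Proof.
rewrite /qtmul foldE qmulmxE big_split_idx.
apply: eq_bigr => r _; apply: eq_bigr => m _.
by rewrite bcirc_zE unfoldE !blk_mkidx !inb_mkidx.
Qed.

Lemma ZZE t n1 n2 n4 (A : qtensor R n1 n2 t.+1) (B : qtensor R n2 n4 t.+1) k l :
  qmulmx (bcirc_z A) (bcirc_z B) k l =
  \big[@qadd R/qzero R]_(r < t.+1) \big[@qadd R/qzero R]_(m < n2)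
     qmul (qmix (A (blk k - r) (inb k) m) (A (blk k + r) (inb k) m))
          (qmix (B (r - blk l) m (inb l)) (B (r + blk l) m (inb l))).
Proof.
rewrite qmulmxE big_split_idx.
apply: eq_bigr => r _; apply: eq_bigr => m _.
by rewrite !bcirc_zE !blk_mkidx !inb_mkidx.
Qed.

Lemma Gd t n (p q : 'I_t.+1) (T1 T4 : 'I_t.+1 -> 'I_t.+1 -> 'I_n -> R) :
  \sum_(r < t.+1) \sum_(m < n) (T1 (p - q - r) r m + T4 (p - q + r) r m) =
  \sum_(r < t.+1) \sum_(m < n) (T1 (p - r) (r - q) m + T4 (p + r) (r + q) m).
Proof.
under eq_bigr do rewrite big_split.
under [RHS]eq_bigr do rewrite big_split.
rewrite !big_split /=.
congr (_ + _).
  rewrite [RHS](reindex_inj (addIr q)) /=.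
  by apply: eq_bigr => r _; rewrite ix1 addrK.
rewrite [RHS](reindex_inj (addIr (- q))) /=.
by apply: eq_bigr => r _; rewrite ix2 subrK.
Qed.

Lemma Gc t n (p q : 'I_t.+1) (T2 T3 : 'I_t.+1 -> 'I_t.+1 -> 'I_n -> R) :
  \sum_(r < t.+1) \sum_(m < n) (T2 (p + q - r) r m + T3 (p + q + r) r m) =
  \sum_(r < t.+1) \sum_(m < n) (T2 (p - r) (r + q) m + T3 (p + r) (r - q) m).
Proof.
under eq_bigr do rewrite big_split.
under [RHS]eq_bigr do rewrite big_split.
rewrite !big_split /=.
congr (_ + _).
  rewrite [RHS](reindex_inj (addIr (- q))) /=.
  by apply: eq_bigr => r _; rewrite ix3 subrK.
rewrite [RHS](reindex_inj (addIr q)) /=.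
by apply: eq_bigr => r _; rewrite ix4 addrK.
Qed.

Lemma q0mix x y : q0 (qmix x y) = q0 x. Proof. by []. Qed.
Lemma q1mix x y : q1 (qmix x y) = q1 x. Proof. by []. Qed.
Lemma q2mix x y : q2 (qmix x y) = q2 y. Proof. by []. Qed.
Lemma q3mix x y : q3 (qmix x y) = q3 y. Proof. by []. Qed.

Lemma Zmul t n1 n2 n4 (A : qtensor R n1 n2 t.+1) (B : qtensor R n2 n4 t.+1) :
  bcirc_z (qtmul A B) = qmulmx (bcirc_z A) (bcirc_z B).
Proof.
apply/matrixP => k l.
rewrite bcirc_zE ZZE !qtmulE.
set p := blk k; set q := blk l; set i := inb k; set j := inb l.
apply: quatP.
- rewrite q0mix !(qsum2_comp (f := @q0 R) (fun _ _ => erefl) erefl).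
  pose T1 := fun a b (m : 'I_n2) => q0 (A a i m) * q0 (B b m j) - q1 (A a i m) * q1 (B b m j).
  pose T4 := fun a b (m : 'I_n2) => - (q2 (A a i m) * q2 (B b m j)) - q3 (A a i m) * q3 (B b m j).
  transitivity (\sum_(r < t.+1) \sum_(m < n2) (T1 (p - q - r) r m + T4 (p - q + r) r m)).
    by apply: eq_bigr => r _; apply: eq_bigr => m _; rewrite /T1 /T4 /qmix /=; ring.
  by rewrite Gd; apply: eq_bigr => r _; apply: eq_bigr => m _; rewrite /T1 /T4 /qmix /=; ring.
- rewrite q1mix !(qsum2_comp (f := @q1 R) (fun _ _ => erefl) erefl).
  pose T1 := fun a b (m : 'I_n2) => q0 (A a i m) * q1 (B b m j) + q1 (A a i m) * q0 (B b m j).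
  pose T4 := fun a b (m : 'I_n2) => q2 (A a i m) * q3 (B b m j) - q3 (A a i m) * q2 (B b m j).
  transitivity (\sum_(r < t.+1) \sum_(m < n2) (T1 (p - q - r) r m + T4 (p - q + r) r m)).
    by apply: eq_bigr => r _; apply: eq_bigr => m _; rewrite /T1 /T4 /qmix /=; ring.
  by rewrite Gd; apply: eq_bigr => r _; apply: eq_bigr => m _; rewrite /T1 /T4 /qmix /=; ring.
- rewrite q2mix !(qsum2_comp (f := @q2 R) (fun _ _ => erefl) erefl).
  pose T2 := fun a b (m : 'I_n2) => q0 (A a i m) * q2 (B b m j) - q1 (A a i m) * q3 (B b m j).
  pose T3 := fun a b (m : 'I_n2) => q2 (A a i m) * q0 (B b m j) + q3 (A a i m) * q1 (B b m j).
  transitivity (\sum_(r < t.+1) \sum_(m < n2) (T2 (p + q - r) r m + T3 (p + q + r) r m)).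
    by apply: eq_bigr => r _; apply: eq_bigr => m _; rewrite /T2 /T3 /qmix /=; ring.
  by rewrite Gc; apply: eq_bigr => r _; apply: eq_bigr => m _; rewrite /T2 /T3 /qmix /=; ring.
- rewrite q3mix !(qsum2_comp (f := @q3 R) (fun _ _ => erefl) erefl).
  pose T2 := fun a b (m : 'I_n2) => q0 (A a i m) * q3 (B b m j) + q1 (A a i m) * q2 (B b m j).
  pose T3 := fun a b (m : 'I_n2) => - (q2 (A a i m) * q1 (B b m j)) + q3 (A a i m) * q0 (B b m j).
  transitivity (\sum_(r < t.+1) \sum_(m < n2) (T2 (p + q - r) r m + T3 (p + q + r) r m)).
    by apply: eq_bigr => r _; apply: eq_bigr => m _; rewrite /T2 /T3 /qmix /=; ring.
  by rewrite Gc; apply: eq_bigr => r _; apply: eq_bigr => m _; rewrite /T2 /T3 /qmix /=; ring.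
Qed.

Lemma unfold_qtI n t (m : 'I_(t.+1 * n)) (j : 'I_n) :
  unfold (qtI R n t.+1) m j = if m == mkidx 0 j then qone R else qzero R.
Proof. by rewrite unfoldE qtIE cond_mkidx. Qed.

Lemma ZE t n1 n2 (T : qtensor R n1 n2 t.+1) :
  qmulmx (bcirc_z T) (unfold (qtI R n2 t.+1)) = unfold T.
Proof.
apply/matrixP => k j; rewrite qmulmxE (big_qdelta (i0 := mkidx 0 j)); last first.
  by move=> m hm; rewrite unfold_qtI (negPf hm) qmulq0.
rewrite unfold_qtI eqxx qmulq1 bcirc_zE blk_mkidx inb_mkidx subr0 addr0 unfoldE.
by case: (T (blk k) (inb k) j).
Qed.

Lemma ZqtI n t : bcirc_z (qtI R n t.+1) = qI R (t.+1 * n).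
Proof.
apply/matrixP => k l; rewrite bcirc_zE !qtIE qIE subr_eq0 cond_mkidx mkidx_blk_inb.
by case: (k == l); case: (_ && _).
Qed.

Lemma Zadd n t (A : qtensor R n n t.+1) :
  bcirc_z (qtadd (qtI R n t.+1) A) = qaddmx (qI R (t.+1 * n)) (bcirc_z A).
Proof.
apply/matrixP => k l; rewrite -ZqtI qaddmxE !bcirc_zE !qtaddE.
by apply: quatP.
Qed.

Lemma main_gen t n (T : qtensor R n n t.+1) :
  qt_invertible T <-> qmx_invertible (bcirc_z T).
Proof.
split.
  case=> N [h1 h2]; exists (bcirc_z N); split.
    by rewrite -Zmul h1 ZqtI.
  by rewrite -Zmul h2 ZqtI.
case=> X [h1 h2].
pose N := fold (qmulmx X (unfold (qtI R n t.+1))).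
have hTN : qtmul T N = qtI R n t.+1.
  by rewrite /qtmul /N unfoldK -qmulmxA h1 qmul1mx foldK.
have hZ : qmulmx (bcirc_z T) (bcirc_z N) = qI R (t.+1 * n).
  by rewrite -Zmul hTN ZqtI.
have hN : bcirc_z N = X.
  by rewrite -[bcirc_z N]qmul1mx -h2 qmulmxA hZ qmulmx1.
exists N; split => //.
by rewrite /qtmul hN -ZE -qmulmxA h2 qmul1mx foldK.
Qed.

End Proof.

Theorem lemma4p2 (R : realType) (n n3 : nat) (A : qtensor R n n n3) :
  qt_invertible (qtadd (qtI R n n3) A) <->
  qmx_invertible (qaddmx (qI R (n3 * n)) (bcirc_z A)).
Proof.
case: n3 A => [|t] A.
  split=> _.
    exists (qI R (0 * n)); split; apply/matrixP => -[i hi]; exfalso; move: hi; by rewrite mul0n ltn0.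
  by exists A; split; apply/ffunP => -[s hs]; exfalso; move: hs; rewrite ltn0.
rewrite -Zadd; exact: main_gen.
Qed.
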